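(* Let $\{x_k\}$ be generated by the Subgradient-InexP method with Polyak's stepsize rule, under the standing assumptions (in particular $\Omega^*\neq\varnothing$). Then for every $x\in\Omega^*$ and every $k=0,1,\dots$, $$\|x_{k+1}-x\|^2\le\|x_k-x\|^2-\underline\beta\,\frac{[f(x_k)-f^*]^2}{\|s_k\|^2}.$$
   Context: Problem: minimize a convex $f:\mathbb{R}^n\to\mathbb{R}$ over a nonempty closed convex $C\subset\mathbb{R}^n$; $f^*:=\inf_{x\in C}f(x)$, $\Omega^*$ the set of minimizers. For $\epsilon\ge0$, $\partial_\epsilon f(x):=\{s: f(y)\ge f(x)+\langle s,y-x\rangle-\epsilon\ \forall y\}$. Relative error tolerance function: any $\varphi_{\gamma,\theta,\lambda}:(\mathbb{R}^n)^3\to[0,\infty)$ with $\varphi_{\gamma,\theta,\lambda}(u,v,w)\le\gamma\|v-u\|^2+\theta\|w-v\|^2+\lambda\|w-u\|^2$; for $u\in C$, $\mathcal{P}_C(\varphi_{\gamma,\theta,\lambda},u,v):=\{w\in C:\langle v-w,z-w\rangle\le\varphi_{\gamma,\theta,\lambda}(u,v,w)\ \forall z\in C\}$. Subgradient-InexP method: $x_0\in C$; at iteration $k$, if $0\in\partial f(x_k)$ stop; otherwise choose nonzero $s_k\in\partial_{\epsilon_k}f(x_k)$, stepsize $t_k>0$, and $x_{k+1}\in\mathcal{P}_C(\varphi_{\gamma_k,\theta_k,\lambda_k},x_k,x_k-t_ks_k)$. Standing assumptions: $\gamma_k\in[0,\bar\gamma)$, $\theta_k\in[0,\bar\theta)$,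 $\lambda_k\in[0,\bar\lambda)$ with $\bar\gamma\ge0$, $\bar\theta,\bar\lambda\in[0,1/2)$; the sequence is infinite. Let $\nu:=\frac{1+2\bar\gamma}{1-2\bar\lambda}$. Polyak's stepsize rule: $\Omega^*\neq\varnothing$, $f^*>-\infty$ known; $\mu\ge0$, $\underline\beta>0$, $\bar\beta>0$; $\{\epsilon_k\}$ nonincreasing, $0<\underline\beta\le\beta_k\le\bar\beta<\frac{1}{2\mu+\nu}$ and $0<\epsilon_k\le\mu\beta_k[f(x_k)-f^*]$ for all $k$; $t_k:=\beta_k\frac{f(x_k)-f^*}{\|s_k\|^2}$. *)

(* Defs.v *)
From HB Require Import structures.
From mathcomp Require Import all_boot all_order all_algebra.
From mathcomp Require Import all_classical all_reals all_analysis.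
Set Implicit Arguments. Unset Strict Implicit. Unset Printing Implicit Defensive.
Import Order.TTheory GRing.Theory Num.Theory.
Import numFieldTopology.Exports.
Local Open Scope ring_scope.
Local Open Scope classical_set_scope.

Section Defs.
Variables (R : realType) (n : nat).
Notation vec := 'rV[R]_n.

Definition dotp (u v : vec) : R := \sum_(i < n) u ord0 i * v ord0 i.
Definition sqnorm (u : vec) : R := dotp u u.

Definition cvx_fun (f : vec -> R) : Prop :=
  forall (x y : vec) (a : R), 0 <= a -> a <= 1 ->
    f (a *: x + (1 - a) *: y) <= a * f x + (1 - a) * f y.

Definition cvx_set (C : set vec) : Prop :=
  forall (x y : vec) (a : R), C x -> C y -> 0 <= a -> a <= 1 ->
    C (a *: x + (1 - a) *: y).

Definition fstar (f : vec -> R) (C : set vec) : R := inf [set f x | x in C].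

Definition Omega_star (f : vec -> R) (C : set vec) : set vec :=
  [set x | C x /\ forall y, C y -> f x <= f y].

Definition eps_subdiff (f : vec -> R) (eps : R) (x : vec) : set vec :=
  [set s | forall y : vec, f y >= f x + dotp s (y - x) - eps].

Definition rel_err_tol (phi : vec -> vec -> vec -> R) (gamma theta lambda : R) : Prop :=
  forall u v w : vec, 0 <= phi u v w /\
    phi u v w <= gamma * sqnorm (v - u) + theta * sqnorm (w - v) + lambda * sqnorm (w - u).

Definition inexact_proj (C : set vec) (phi : vec -> vec -> vec -> R) (u v : vec) : set vec :=
  [set w | C w /\ forall z, C z -> dotp (v - w) (z - w) <= phi u v w].

End Defs.

(* Main.v *)
Require Import Defs.
From HB Require Import structures.
From mathcomp Require Import all_boot all_order all_algebra.
From mathcomp Require Import all_classical all_reals all_analysis.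
From mathcomp Require Import ring lra.
Import Order.TTheory GRing.Theory Num.Theory.
Import numFieldTopology.Exports.
Local Open Scope ring_scope.
Local Open Scope classical_set_scope.

Section Aux.
Variables (R : realType) (n : nat).
Implicit Types u v w : 'rV[R]_n.

Lemma dotpC u v : dotp u v = dotp v u.
Proof. by apply: eq_bigr => i _; rewrite mulrC. Qed.

Lemma dotpDl u v w : dotp (u + v) w = dotp u w + dotp v w.
Proof. by rewrite /dotp -big_split; apply: eq_bigr => i _; rewrite mxE mulrDl. Qed.

Lemma dotpZl (a : R) u w : dotp (a *: u) w = a * dotp u w.
Proof. by rewrite /dotp mulr_sumr; apply: eq_bigr => i _; rewrite mxE mulrA. Qed.

Lemma dotpNl u w : dotp (- u) w = - dotp u w.
Proof. by rewrite -scaleN1r dotpZl mulN1r. Qed.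

Lemma dotpDr u v w : dotp w (u + v) = dotp w u + dotp w v.
Proof. by rewrite dotpC dotpDl !(dotpC w). Qed.

Lemma dotpZr (a : R) u w : dotp w (a *: u) = a * dotp w u.
Proof. by rewrite dotpC dotpZl dotpC. Qed.

Lemma dotpNr u w : dotp w (- u) = - dotp w u.
Proof. by rewrite dotpC dotpNl dotpC. Qed.

Lemma sqnorm_ge0 u : 0 <= sqnorm u.
Proof. by apply: sumr_ge0 => i _; rewrite -expr2 sqr_ge0. Qed.

Lemma sqnorm_gt0 u : u != 0 -> 0 < sqnorm u.
Proof.
move=> u0; rewrite lt_def sqnorm_ge0 andbT; apply: contra u0 => /eqP H.
apply/eqP/rowP => i; rewrite mxE.
have hF : forall j : 'I_n, true -> 0 <= u ord0 j * u ord0 j by move=> j _; rewrite -expr2 sqr_ge0.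
rewrite /sqnorm /dotp in H. have := (@psumr_eq0P _ _ _ _ hF H i isT).
by move/eqP; rewrite mulf_eq0 orbb => /eqP.
Qed.

End Aux.
Arguments dotpC {R n}. Arguments sqnorm_ge0 {R n}. Arguments sqnorm_gt0 {R n}.

Theorem mainTheorem7 (R : realType) (n : nat)
  (f : 'rV[R]_n -> R) (C : set 'rV[R]_n)
  (x : nat -> 'rV[R]_n) (s : nat -> 'rV[R]_n)
  (eps t beta gamma theta lambda : nat -> R)
  (phi : nat -> 'rV[R]_n -> 'rV[R]_n -> 'rV[R]_n -> R)
  (gbar thbar lbar mu blow bhigh : R) :
  (* problem data *)
  cvx_fun f -> C !=set0 -> closed C -> cvx_set C ->
  (* standing assumptions on the tolerances *)
  0 <= gbar -> 0 <= thbar < 1/2 -> 0 <= lbar < 1/2 ->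
  (forall k, 0 <= gamma k < gbar) ->
  (forall k, 0 <= theta k < thbar) ->
  (forall k, 0 <= lambda k < lbar) ->
  (forall k, rel_err_tol (phi k) (gamma k) (theta k) (lambda k)) ->
  (* Subgradient-InexP iteration, infinite sequence *)
  C (x 0%N) ->
  (forall k, ~ eps_subdiff f 0 (x k) 0) ->
  (forall k, s k != 0 /\ eps_subdiff f (eps k) (x k) (s k)) ->
  (forall k, 0 < t k) ->
  (forall k, inexact_proj C (phi k) (x k) (x k - t k *: s k) (x k.+1)) ->
  (* Polyak's stepsize rule *)
  Omega_star f C !=set0 ->
  0 <= mu -> 0 < blow -> 0 < bhigh ->
  (forall k, eps k.+1 <= eps k) ->
  (forall k, blow <= beta k /\ beta k <= bhigh) ->
  bhigh < 1 / (2 * mu + (1 + 2 * gbar) / (1 - 2 * lbar)) ->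
  (forall k, 0 < eps k /\ eps k <= mu * beta k * (f (x k) - fstar f C)) ->
  (forall k, t k = beta k * (f (x k) - fstar f C) / sqnorm (s k)) ->
  (* conclusion *)
  forall xs, Omega_star f C xs -> forall k : nat,
    sqnorm (x k.+1 - xs) <=
      sqnorm (x k - xs) - blow * ((f (x k) - fstar f C) ^+ 2 / sqnorm (s k)).
Proof.
move=> _ _ _ _ g0 /andP[th0 th1] /andP[l0 l1] Hg Hth Hl Hphi Cx0 _ Hs Ht Hproj _
  mu0 bl0 bh0 _ Hbeta Hbh Heps Htk xs [Cxs xsmin] k.
have fsE : fstar f C = f xs.
  apply/eqP; rewrite eq_le; apply/andP; split.
    apply: ge_inf; last by exists xs.
    by exists (f xs) => _ [y Cy <-]; exact: xsmin.
  by apply: lb_le_inf; [exists (f xs), xs | move=> _ [y Cy <-]; exact: xsmin].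
have Cx : forall j, C (x j) by elim=> [//|j _]; case: (Hproj j).
rewrite fsE.
have [sk0 Hsub] := Hs k.
have tk0 := Ht k.
case: (Hproj k) => _ Hpr.
have Hp1 := Hpr xs Cxs.
have Hp2 := Hpr (x k) (Cx k).
have Hsp := Hsub xs.
have [Hphi0 Hphi1] := Hphi k (x k) (x k - t k *: s k) (x k.+1).
set a := x k in Hp1 Hp2 Hsp Hphi0 Hphi1 *.
set w := x k.+1 in Hp1 Hp2 Hsp Hphi0 Hphi1 *.
set sv := s k in Hp1 Hp2 Hsp Hphi0 Hphi1 sk0 *.
set tt := t k in Hp1 Hp2 Hsp Hphi0 Hphi1 tk0 *.
set A := a - xs. set B := w - a.
have e1 : w - xs = B + A by rewrite /A /B addrA subrK.
have e2 : a - tt *: sv - w = - (tt *: sv) - B by apply/rowP => i; rewrite /B !mxE; lra.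
have e3 : xs - w = - (B + A) by rewrite -e1 opprB.
have e4 : a - w = - B by rewrite opprB.
have e5 : a - tt *: sv - a = - (tt *: sv) by apply/rowP => i; rewrite !mxE; lra.
have e6 : w - (a - tt *: sv) = B + tt *: sv by apply/rowP => i; rewrite /B !mxE; lra.
have e7 : xs - a = - A by rewrite opprB.
have hW := sqnorm_ge0 (w - (a - tt *: sv)).
have hss := sqnorm_gt0 _ sk0.
rewrite /sqnorm e6 -/B in hW.
rewrite e2 e3 in Hp1. rewrite e2 e4 in Hp2. rewrite e7 in Hsp.
rewrite /sqnorm e5 e6 -/B in Hphi1.
rewrite /sqnorm e1.
rewrite ?(dotpDl, dotpDr, dotpNl, dotpNr, dotpZl, dotpZr) in Hp1 Hp2 Hsp Hphi1 hW hss *.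
rewrite ?(dotpC w a) ?(dotpC sv w) ?(dotpC sv a) ?(dotpC xs a) ?(dotpC xs w) ?(dotpC sv xs) in Hp1 Hp2 Hsp Hphi1 hW hss *.
rewrite /sqnorm in hss.
have Htt : tt = beta k * (f a - f xs) / dotp sv sv by rewrite /tt Htk fsE.
have [ep0 epb] := Heps k. rewrite fsE -/a in epb.
have [be1 be2] := Hbeta k.
have /andP[gk0 gk1] := Hg k.
have /andP[tk1 tk2] := Hth k.
have /andP[lk0 lk1] := Hl k.
have Phi1 := le_trans Hp1 Hphi1.
have Phi2 := le_trans Hp2 Hphi1.
clear Hp1 Hp2 Hphi1 Hphi0.
set g := gamma k in gk0 gk1 Phi1 Phi2.
set th := theta k in tk1 tk2 Phi1 Phi2.
set l := lambda k in lk0 lk1 Phi1 Phi2.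
set be := beta k in be1 be2 epb Htt.
set ep := eps k in ep0 epb Hsp.
set fa := f a in epb Hsp Htt *.
set fx := f xs in epb Hsp Htt *.
move: Phi1 Phi2 hW Hsp Htt hss.
set ww := dotp w w. set aw := dotp a w. set aa := dotp a a. set wxs := dotp w xs.
set axs := dotp a xs. set xx := dotp xs xs. set ws := dotp w sv. set as_ := dotp a sv.
set xss := dotp xs sv. set ss := dotp sv sv.
move=> Phi1 Phi2 hW Hsp Htt hss.
have q0 : 0 <= tt * (tt * ss) by rewrite mulr_ge0 ?mulr_ge0 // ltW.
have hTW : 0 <= (1 - 2 * th) * (ww - 2 * aw + aa + 2 * tt * (ws - as_) + tt * (tt * ss)).
  apply: mulr_ge0; lra.
have S1 : (1 - 2 * l) * (ww - 2 * aw + aa) <= (1 + 2 * g) * (tt * (tt * ss)) by lra.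
have hl : 0 < 1 - 2 * l by lra.
set K := (1 + 2 * g) / (1 - 2 * l).
have S2 : ww - 2 * aw + aa <= K * (tt * (tt * ss)).
  by rewrite /K mulrAC ler_pdivlMr //; lra.
have KEq : (1 + 2 * g) * (tt * (tt * ss)) = K * (tt * (tt * ss)) - 2 * l * (K * (tt * (tt * ss))).
  by rewrite /K; field; rewrite gt_eqF.
set nu := (1 + 2 * gbar) / (1 - 2 * lbar) in Hbh *.
have hlb : 0 < 1 - 2 * lbar by lra.
have Knu : K <= nu.
  rewrite /K /nu ler_pdivrMr // mulrAC ler_pdivlMr //.
  have h1 : 1 + 2 * g <= 1 + 2 * gbar by lra.
  have h2 : 1 - 2 * lbar <= 1 - 2 * l by lra.
  have h3 : 0 <= 1 + 2 * gbar by lra.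
  have := ler_wpM2r (ltW hlb) h1.
  have := ler_wpM2l h3 h2.
  lra.
have nu0 : 0 < nu by rewrite /nu divr_gt0 //; lra.
clearbody K nu.
have lk0' : 0 <= l by [].
have S3 := ler_wpM2l lk0' S2.
have S4 := ler_wpM2r q0 Knu.
have S5 : tt * (fa - fx - mu * be * (fa - fx)) <= tt * (as_ - xss).
  apply: ler_wpM2l; [exact: ltW | lra].
have Main : ww - 2 * aw + aa + 2 * (aw - aa - wxs + axs) <=
    - 2 * (tt * (fa - fx - mu * be * (fa - fx))) + nu * (tt * (tt * ss)) by lra.
have E1 : tt * (fa - fx - mu * be * (fa - fx)) = be * (1 - mu * be) * ((fa - fx) ^+ 2 / ss).
  by rewrite Htt; field; rewrite gt_eqF.
have E2 : tt * (tt * ss) = be * be * ((fa - fx) ^+ 2 / ss).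
  by rewrite Htt; field; rewrite gt_eqF.
rewrite E1 E2 in Main.
have hE : 0 <= (fa - fx) ^+ 2 / ss by rewrite divr_ge0 ?sqr_ge0 // ltW.
move: Main hE; set E := (fa - fx) ^+ 2 / ss => Main hE.
have z0 : 0 < 2 * mu + nu by lra.
rewrite ltr_pdivlMr // in Hbh.
have hc : be * (2 * mu + nu) <= bhigh * (2 * mu + nu) by rewrite ler_wpM2r // ltW.
have f1 : 0 <= E * (be * (1 - be * (2 * mu + nu))).
  by rewrite mulr_ge0 // mulr_ge0 //; lra.
have f2 : 0 <= E * (be - blow) by rewrite mulr_ge0 //; lra.
lra.
Qed.
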